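(* Let $\varepsilon>0$, and let $\gamma\in C([0,1])\cap C^1((0,1))$ satisfy $\gamma(0)=\gamma(1)=0$ and $\gamma(t)>0$ for $t\in(0,1)$. Let $c(t):=\dot\gamma(t)-\varepsilon/\gamma(t)$ for $t\in(0,1)$. Suppose: - the improper integral $\int_0^1 \frac{1}{\gamma(t)}\,\mathrm dt$ is finite, and - the product $\dot\gamma(t)\gamma(t)$ has a (unique) continuous extension to $[0,1]$. Then there exists a strictly increasing, bijective, continuously differentiable time change $\theta:[0,1]\to[0,1]$ such that the function $$\hat c(t):=c(\theta(t))\dot\theta(t)=\Big(\dot\gamma(\theta(t))-\frac{\varepsilon}{\gamma(\theta(t))}\Big)\dot\theta(t),$$ defined for $t\in(0,1)$, has a continuous extension to $[0,1]$. *)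

(* Defs.v *)
From Stdlib Require Import Reals.
From Coquelicot Require Import Coquelicot.
Open Scope R_scope.

Definition I01 (t : R) : Prop := 0 <= t <= 1.
Definition J01 (t : R) : Prop := 0 < t < 1.

Definition cont_on_I01 (f : R -> R) : Prop :=
  forall t, I01 t -> filterlim f (within I01 (locally t)) (locally (f t)).

Definition C1_open01 (f : R -> R) : Prop :=
  forall t, J01 t -> ex_derive f t /\ continuous (Derive f) t.

Definition is_derive_on_I01 (f df : R -> R) : Prop :=
  forall t, I01 t ->
    filterlim (fun s => (f s - f t) / (s - t))
      (within (fun s => I01 s /\ s <> t) (locally t)) (locally (df t)).

Definition C1_closed01 (f df : R -> R) : Prop :=
  is_derive_on_I01 f df /\ cont_on_I01 df.

Definition has_cont_ext_I01 (h : R -> R) : Prop :=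
  exists g : R -> R, cont_on_I01 g /\ forall t, J01 t -> g t = h t.

(* Main.v *)
Require Import Defs.
From Stdlib Require Import Reals Lra ClassicalEpsilon.
From Coquelicot Require Import Coquelicot.
Open Scope R_scope.

Lemma ballR (x e y : R) : ball x e y <-> Rabs (y - x) < e.
Proof. reflexivity. Qed.

Lemma cont_eps (f : R -> R) : cont_on_I01 f <->
  forall t, I01 t -> forall e, 0 < e -> exists d, 0 < d /\
    forall u, I01 u -> Rabs (u - t) < d -> Rabs (f u - f t) < e.
Proof.
  split.
  - intros Hf t Ht e He.
    specialize (Hf t Ht).
    apply filterlim_locally with (eps := mkposreal e He) in Hf.
    destruct Hf as [d Hd].
    exists d. split; [apply cond_pos|].
    intros u Hu Hut. apply (Hd u); [apply ballR; exact Hut| exact Hu].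
  - intros Hf t Ht. apply filterlim_locally. intros eps.
    destruct (Hf t Ht eps (cond_pos eps)) as [d [Hd Hd']].
    exists (mkposreal d Hd). intros u Hu HI. apply ballR. apply Hd'; auto.
Qed.

Lemma cont_comp (h th k : R -> R) (a b : R) :
  cont_on_I01 h -> cont_on_I01 th -> (forall t, I01 t -> I01 (th t)) ->
  (forall t, k t = a * h (th t) + b) -> cont_on_I01 k.
Proof.
  intros Hh Hth Hr Hk. rewrite cont_eps in *.
  intros t Ht e He.
  destruct (Hh (th t) (Hr t Ht) (e / (Rabs a + 1))) as [d1 [Hd1 H1]].
  { apply Rdiv_lt_0_compat; auto. pose proof (Rabs_pos a); lra. }
  destruct (Hth t Ht d1 Hd1) as [d2 [Hd2 H2]].
  exists d2. split; auto. intros u Hu Hut.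
  rewrite !Hk.
  replace (a * h (th u) + b - (a * h (th t) + b)) with (a * (h (th u) - h (th t))) by ring.
  rewrite Rabs_mult.
  specialize (H1 (th u) (Hr u Hu) (H2 u Hu Hut)).
  pose proof (Rabs_pos a).
  pose proof (Rabs_pos (h (th u) - h (th t))).
  apply Rle_lt_trans with ((Rabs a + 1) * Rabs (h (th u) - h (th t))).
  { nra. }
  apply Rmult_lt_reg_l with (/ (Rabs a + 1)).
  { apply Rinv_0_lt_compat; lra. }
  rewrite <- Rmult_assoc, Rinv_l by lra. rewrite Rmult_1_l.
  unfold Rdiv in H1. lra.
Qed.

Lemma mvt_strict (H h : R -> R) a b : a < b ->
  (forall c, a < c < b -> is_derive H c (h c)) ->
  (forall c, a <= c <= b -> continuity_pt H c) ->
  exists c, a < c < b /\ H b - H a = h c * (b - a).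
Proof.
  intros Hab Hd Hc.
  assert (pr1 : forall c, a < c < b -> derivable_pt H c).
  { intros c Hc'. exists (h c). apply is_derive_Reals. auto. }
  destruct (MVT H id a b pr1 (fun c _ => derivable_pt_id c) Hab Hc
     (fun c _ => derivable_continuous_pt _ _ (derivable_pt_id c))) as [c [P Hm]].
  exists c. split; auto.
  rewrite derive_pt_id in Hm.
  rewrite (derive_pt_eq_0 H c (h c) (pr1 c P)) in Hm.
  2: { apply is_derive_Reals; auto. }
  unfold id in Hm. lra.
Qed.
Lemma gen_extract (f : R -> R) l (e : posreal) :
  is_RInt_gen f (at_right 0) (at_left 1) l ->
  exists d1 d2, 0 < d1 /\ 0 < d2 /\ forall a b, 0 < a < d1 -> 1 - d2 < b < 1 ->
     Rabs (RInt f a b - l) < e /\ is_RInt f a b (RInt f a b).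
Proof.
  intros Hl.
  destruct (Hl (ball l e) (locally_ball l e)) as [Q R0 [d1 HQ] [d2 HR] HP].
  exists d1, d2. split; [apply cond_pos|]. split; [apply cond_pos|].
  intros a b Ha Hb.
  destruct (HP a b) as [y [Hy1 Hy2]].
  - apply HQ; [apply ballR; rewrite Rminus_0_r, Rabs_right; lra | lra].
  - apply HR; [apply ballR; rewrite Rabs_left; lra | lra].
  - simpl in Hy1. rewrite (is_RInt_unique _ _ _ _ Hy1). split; auto.
Qed.

Lemma lim0 (f : R -> R) l :
  (forall a b, 0 < a < 1 -> 0 < b < 1 -> ex_RInt f a b) ->
  is_RInt_gen f (at_right 0) (at_left 1) l ->
  exists A : R, filterlim (fun s => RInt f (1/2) s) (at_right 0) (locally A).
Proof.
  intros Hex Hl.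
  apply (filterlim_locally_cauchy (U := R_CompleteSpace) (F := at_right 0)).
  intros eps.
  assert (He2 : 0 < eps / 2) by (pose proof (cond_pos eps); lra).
  destruct (gen_extract f l (mkposreal _ He2) Hl) as [d1 [d2 [Hd1 [Hd2 Hg]]]].
  simpl in Hg.
  exists (fun u => 0 < u < Rmin d1 (1/2)). split.
  - assert (Hm : 0 < Rmin d1 (1/2)) by (apply Rmin_pos; lra).
    exists (mkposreal _ Hm). intros y By Hy. apply ballR in By. simpl in By.
    change (Rabs (y - 0) < Rmin d1 (1/2)) in By. rewrite Rminus_0_r, Rabs_right in By by lra. lra.
  - intros u v Hu Hv. apply ballR.
    pose proof (Rmin_l d1 (1/2)). pose proof (Rmin_r d1 (1/2)).
    set (b := Rmax (1/2) (1 - d2/2)).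
    assert (Hb : 1/2 <= b < 1 /\ 1 - d2 < b).
    { unfold b. destruct (Rmax_Rle (1/2) (1 - d2/2) (Rmax (1/2) (1 - d2/2))) as [_ _].
      pose proof (Rmax_l (1/2) (1 - d2/2)). pose proof (Rmax_r (1/2) (1 - d2/2)).
      destruct (Rle_dec (1/2) (1 - d2/2)).
      - rewrite Rmax_right by lra. lra.
      - rewrite Rmax_left by lra. lra. }
    assert (E1 : RInt f (1/2) u + RInt f u v = RInt f (1/2) v)
      by (apply (RInt_Chasles f); apply Hex; lra).
    assert (E2 : RInt f u v + RInt f v b = RInt f u b)
      by (apply (RInt_Chasles f); apply Hex; lra).
    destruct (Hg u b) as [G1 _]; [lra|lra|].
    destruct (Hg v b) as [G2 _]; [lra|lra|].
    replace (RInt f (1/2) v - RInt f (1/2) u) with ((RInt f u b - l) - (RInt f v b - l)) by lra.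
    eapply Rle_lt_trans; [apply Rabs_triang|]. rewrite Rabs_Ropp. lra.
Qed.

Lemma lim1 (f : R -> R) l :
  (forall a b, 0 < a < 1 -> 0 < b < 1 -> ex_RInt f a b) ->
  is_RInt_gen f (at_right 0) (at_left 1) l ->
  exists B : R, filterlim (fun s => RInt f (1/2) s) (at_left 1) (locally B).
Proof.
  intros Hex Hl.
  apply (filterlim_locally_cauchy (U := R_CompleteSpace) (F := at_left 1)).
  intros eps.
  assert (He2 : 0 < eps / 2) by (pose proof (cond_pos eps); lra).
  destruct (gen_extract f l (mkposreal _ He2) Hl) as [d1 [d2 [Hd1 [Hd2 Hg]]]].
  simpl in Hg.
  exists (fun u => 1 - Rmin d2 (1/2) < u < 1). split.
  - assert (Hm : 0 < Rmin d2 (1/2)) by (apply Rmin_pos; lra).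
    exists (mkposreal _ Hm). intros y By Hy. apply ballR in By. simpl in By.
    change (Rabs (y - 1) < Rmin d2 (1/2)) in By. rewrite Rabs_left in By by lra. lra.
  - intros u v Hu Hv. apply ballR.
    pose proof (Rmin_l d2 (1/2)). pose proof (Rmin_r d2 (1/2)).
    set (a := Rmin (1/2) (d1/2)).
    assert (Ha : 0 < a <= 1/2 /\ a < d1).
    { unfold a. destruct (Rle_dec (1/2) (d1/2)).
      - rewrite Rmin_left by lra. lra.
      - rewrite Rmin_right by lra. lra. }
    assert (E1 : RInt f (1/2) u + RInt f u v = RInt f (1/2) v)
      by (apply (RInt_Chasles f); apply Hex; lra).
    assert (E2 : RInt f a u + RInt f u v = RInt f a v)
      by (apply (RInt_Chasles f); apply Hex; lra).
    destruct (Hg a u) as [G1 _]; [lra|lra|].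
    destruct (Hg a v) as [G2 _]; [lra|lra|].
    replace (RInt f (1/2) v - RInt f (1/2) u) with ((RInt f a v - l) - (RInt f a u - l)) by lra.
    eapply Rle_lt_trans; [apply Rabs_triang|]. rewrite Rabs_Ropp. lra.
Qed.

Theorem lemma4p1 (eps : R) (gamma : R -> R) :
  0 < eps ->
  cont_on_I01 gamma ->
  C1_open01 gamma ->
  gamma 0 = 0 -> gamma 1 = 0 ->
  (forall t, J01 t -> 0 < gamma t) ->
  (* the improper integral of 1/gamma over (0,1) is finite *)
  ex_RInt_gen (fun t => / gamma t) (at_right 0) (at_left 1) ->
  (* gamma' * gamma has a continuous extension to [0,1] *)
  has_cont_ext_I01 (fun t => Derive gamma t * gamma t) ->
  exists theta dtheta : R -> R,
    C1_closed01 theta dtheta /\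
    (forall s t, I01 s -> I01 t -> s < t -> theta s < theta t) /\
    (forall t, I01 t -> I01 (theta t)) /\
    (forall y, I01 y -> exists t, I01 t /\ theta t = y) /\
    has_cont_ext_I01
      (fun t => (Derive gamma (theta t) - eps / gamma (theta t)) * dtheta t).
Proof.
  intros Heps Hgc Hg1 Hg0 Hg1' Hpos Hint [g [Hgcont Hgeq]].
  set (f := fun t => / gamma t).
  assert (Hgci : forall t, J01 t -> continuous gamma t).
  { intros t Ht. exact (ex_derive_continuous gamma t (proj1 (Hg1 t Ht))). }
  assert (Hfc : forall t, J01 t -> continuous f t).
  { intros t Ht. apply continuous_Rinv_comp; [apply Hgci; auto|].
    specialize (Hpos t Ht). lra. }
  assert (Hex : forall a b, 0 < a < 1 -> 0 < b < 1 -> ex_RInt f a b).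
  { intros a b Ha Hb. apply (ex_RInt_continuous (V := R_CompleteNormedModule)). intros z Hz. apply Hfc.
    split.
    - apply Rlt_le_trans with (Rmin a b); [apply Rmin_glb_lt; lra| lra].
    - apply Rle_lt_trans with (Rmax a b); [lra | apply Rmax_lub_lt; lra]. }
  destruct Hint as [l Hl].
  destruct (lim0 f l Hex Hl) as [A HA].
  destruct (lim1 f l Hex Hl) as [B HB].
  set (G := fun s => RInt f (1/2) s) in HA, HB.
  assert (HGd : forall s, J01 s -> is_derive G s (f s)).
  { intros s Hs. apply (is_derive_RInt f G (1/2) s); [| apply Hfc; auto].
    assert (Hm : 0 < Rmin s (1 - s)) by (apply Rmin_pos; unfold J01 in Hs; lra).
    exists (mkposreal _ Hm). intros b Hb.
    change (Rabs (b - s) < Rmin s (1 - s)) in Hb.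
    pose proof (Rmin_l s (1 - s)). pose proof (Rmin_r s (1 - s)).
    apply Rabs_def2 in Hb.
    apply (RInt_correct (V := R_CompleteNormedModule)). apply Hex; unfold J01 in Hs; lra. }
  set (H := fun s => if Rle_dec s 0 then A else if Rle_dec 1 s then B else G s).
  assert (HH0 : H 0 = A).
  { unfold H. destruct (Rle_dec 0 0); [auto| lra]. }
  assert (HH1 : H 1 = B).
  { unfold H. destruct (Rle_dec 1 0); [lra|]. destruct (Rle_dec 1 1); [auto| lra]. }
  assert (HHJ : forall s, J01 s -> H s = G s).
  { intros s [Hs1 Hs2]. unfold H. destruct (Rle_dec s 0); [lra|].
    destruct (Rle_dec 1 s); [lra| auto]. }
  assert (HHd : forall s, J01 s -> is_derive H s (f s)).
  { intros s Hs. apply is_derive_ext_loc with G; [| apply HGd; auto].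
    assert (Hm : 0 < Rmin s (1 - s)) by (apply Rmin_pos; unfold J01 in Hs; lra).
    exists (mkposreal _ Hm). intros b Hb.
    change (Rabs (b - s) < Rmin s (1 - s)) in Hb.
    pose proof (Rmin_l s (1 - s)). pose proof (Rmin_r s (1 - s)).
    apply Rabs_def2 in Hb. rewrite HHJ; auto. unfold J01 in *; lra. }
  assert (HHc : forall s, continuity_pt H s).
  { intros s. apply continuity_pt_filterlim. fold (continuous H s).
    destruct (Rlt_le_dec s 0) as [Hs0|Hs0].
    { apply continuous_ext_loc with (fun _ => A); [|apply continuous_const].
      assert (Hm : 0 < - s) by lra.
      exists (mkposreal _ Hm). intros y Hy.
      change (Rabs (y - s) < - s) in Hy. apply Rabs_def2 in Hy.
      unfold H. destruct (Rle_dec y 0); [auto | lra]. }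
    destruct (Rlt_le_dec 1 s) as [Hs1|Hs1].
    { apply continuous_ext_loc with (fun _ => B); [|apply continuous_const].
      assert (Hm : 0 < s - 1) by lra.
      exists (mkposreal _ Hm). intros y Hy.
      change (Rabs (y - s) < s - 1) in Hy. apply Rabs_def2 in Hy.
      unfold H. destruct (Rle_dec y 0); [lra|]. destruct (Rle_dec 1 y); [auto | lra]. }
    destruct Hs0 as [Hs0|Hs0].
    2: { subst s. apply filterlim_locally. intros e.
         apply filterlim_locally with (eps := e) in HA.
         destruct HA as [d Hd].
         assert (Hm : 0 < Rmin d 1) by (apply Rmin_pos; [apply cond_pos|lra]).
         exists (mkposreal _ Hm). intros y Hy.
         change (Rabs (y - 0) < Rmin d 1) in Hy.
         pose proof (Rmin_l d 1). pose proof (Rmin_r d 1).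
         rewrite HH0. destruct (Rle_dec y 0) as [Hy0|Hy0].
         - unfold H. destruct (Rle_dec y 0); [apply ball_center| lra].
         - rewrite HHJ. 2: { apply Rabs_def2 in Hy. unfold J01; lra. }
           apply Hd; [| lra]. change (Rabs (y - 0) < d). lra. }
    destruct Hs1 as [Hs1|Hs1].
    2: { subst s. apply filterlim_locally. intros e.
         apply filterlim_locally with (eps := e) in HB.
         destruct HB as [d Hd].
         assert (Hm : 0 < Rmin d 1) by (apply Rmin_pos; [apply cond_pos|lra]).
         exists (mkposreal _ Hm). intros y Hy.
         change (Rabs (y - 1) < Rmin d 1) in Hy.
         pose proof (Rmin_l d 1). pose proof (Rmin_r d 1).
         rewrite HH1. destruct (Rle_dec 1 y) as [Hy0|Hy0].
         - unfold H. destruct (Rle_dec y 0); [lra|].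
           destruct (Rle_dec 1 y); [apply ball_center| lra].
         - rewrite HHJ. 2: { apply Rabs_def2 in Hy. unfold J01; lra. }
           apply Hd; [| lra]. change (Rabs (y - 1) < d). lra. }
    apply (ex_derive_continuous (K := R_AbsRing) (V := R_NormedModule)). exists (f s). apply HHd. split; auto. }
  assert (Hmvt : forall x y, 0 <= x -> x < y -> y <= 1 ->
            exists c, x < c < y /\ H y - H x = f c * (y - x)).
  { intros x y Hx Hxy Hy. apply mvt_strict; auto.
    intros c Hc. apply HHd. unfold J01; lra. }
  assert (Hfp : forall c, J01 c -> 0 < f c).
  { intros c Hc. unfold f. apply Rinv_0_lt_compat. auto. }
  assert (Hstrict : forall x y, 0 <= x -> x < y -> y <= 1 -> H x < H y).
  { intros x y Hx Hxy Hy. destruct (Hmvt x y Hx Hxy Hy) as [c [Hc Hm]].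
    assert (0 < f c) by (apply Hfp; unfold J01; lra).
    assert (0 < f c * (y - x)) by (apply Rmult_lt_0_compat; lra). lra. }
  assert (Hmono : forall x y, I01 x -> I01 y -> x <= y -> H x <= H y).
  { intros x y [Hx _] [_ Hy] [Hxy|Hxy].
    - left. apply Hstrict; auto.
    - rewrite Hxy; lra. }
  assert (Hinj : forall x y, I01 x -> I01 y -> H x = H y -> x = y).
  { intros x y Hx Hy Hxy. destruct (total_order_T x y) as [[Hl'|Hl']|Hl']; auto.
    - pose proof (Hstrict x y (proj1 Hx) Hl' (proj2 Hy)). lra.
    - pose proof (Hstrict y x (proj1 Hy) Hl' (proj2 Hx)). lra. }
  set (L := B - A).
  assert (HL : 0 < L).
  { unfold L. rewrite <- HH0, <- HH1. pose proof (Hstrict 0 1). lra. }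
  set (theta := fun t => epsilon (inhabits 0) (fun s => I01 s /\ H s = A + L * t)).
  assert (Hth : forall t, I01 t -> I01 (theta t) /\ H (theta t) = A + L * t).
  { intros t Ht. unfold theta. apply epsilon_spec.
    destruct (IVT_gen H 0 1 (A + L * t) HHc) as [x [Hx1 Hx2]].
    - rewrite HH0, HH1. rewrite Rmin_left, Rmax_right by (unfold L in HL; lra).
      unfold I01 in Ht. assert (0 <= L * t) by (apply Rmult_le_pos; lra). assert (0 <= L * (1 - t)) by (apply Rmult_le_pos; lra). unfold L in *. split; nra.
    - exists x. rewrite Rmin_left, Rmax_right in Hx1 by lra. split; auto. }
  assert (Hthstr : forall s t, I01 s -> I01 t -> s < t -> theta s < theta t).
  { intros s t Hs Ht Hst. destruct (Hth s Hs) as [Hs1 Hs2].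
    destruct (Hth t Ht) as [Ht1 Ht2].
    destruct (Rlt_le_dec (theta s) (theta t)) as [|Hle]; auto. exfalso.
    pose proof (Hmono _ _ Ht1 Hs1 Hle). nra. }
  assert (Hsurj : forall y, I01 y -> exists t, I01 t /\ theta t = y).
  { intros y Hy. exists ((H y - A) / L).
    assert (Ht : I01 ((H y - A) / L)).
    { pose proof (Hmono 0 y ltac:(unfold I01; lra) Hy (proj1 Hy)).
      pose proof (Hmono y 1 Hy ltac:(unfold I01; lra) (proj2 Hy)).
      rewrite HH0 in *. rewrite HH1 in *. unfold I01. split.
      - apply Rdiv_le_0_compat; lra.
      - apply Rmult_le_reg_r with L; auto. unfold Rdiv.
        rewrite Rmult_assoc, Rinv_l, Rmult_1_r by lra. unfold L. lra. }
    split; auto. destruct (Hth _ Ht) as [H1 H2]. apply Hinj; auto.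
    rewrite H2. unfold Rdiv. rewrite (Rmult_comm (H y - A)), <- Rmult_assoc, Rinv_r, Rmult_1_l by lra. ring. }
  assert (HthJ : forall t, J01 t -> J01 (theta t)).
  { intros t [Ht0 Ht1].
    assert (I0 : I01 0) by (unfold I01; lra).
    assert (I1 : I01 1) by (unfold I01; lra).
    assert (It : I01 t) by (unfold I01; lra).
    pose proof (Hthstr 0 t I0 It Ht0). pose proof (Hthstr t 1 It I1 Ht1).
    destruct (Hth 0 I0) as [[? ?] _]. destruct (Hth 1 I1) as [[? ?] _].
    unfold J01; lra. }
  assert (Hquot : forall t u, I01 t -> I01 u -> u <> t -> exists c, J01 c /\
      Rabs (c - theta t) <= Rabs (theta u - theta t) /\
      (theta u - theta t) / (u - t) = L * gamma c).
  { intros t u Ht Hu Hut.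
    destruct (Hth t Ht) as [[Ht1 Ht2] Ht3]. destruct (Hth u Hu) as [[Hu1 Hu2] Hu3].
    destruct (Rlt_le_dec u t) as [Hlt|Hle].
    - pose proof (Hthstr u t Hu Ht Hlt).
      destruct (Hmvt (theta u) (theta t)) as [c [Hc Hm]]; try lra.
      assert (Jc : J01 c) by (unfold J01; lra).
      pose proof (Hpos c Jc).
      exists c. split; auto. split.
      + rewrite (Rabs_left (c - theta t)), (Rabs_left (theta u - theta t)) by lra. lra.
      + unfold f in Hm. rewrite Ht3, Hu3 in Hm.
        assert (E : theta t - theta u = gamma c * (L * (t - u))).
        { replace (L * (t - u)) with (A + L * t - (A + L * u)) by ring.
          rewrite Hm. field. lra. }
        replace (theta u - theta t) with (gamma c * (L * (u - t))) by lra.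
        field. lra.
    - assert (Hlt : t < u) by lra.
      pose proof (Hthstr t u Ht Hu Hlt).
      destruct (Hmvt (theta t) (theta u)) as [c [Hc Hm]]; try lra.
      assert (Jc : J01 c) by (unfold J01; lra).
      pose proof (Hpos c Jc).
      exists c. split; auto. split.
      + rewrite (Rabs_right (c - theta t)), (Rabs_right (theta u - theta t)) by lra. lra.
      + unfold f in Hm. rewrite Ht3, Hu3 in Hm.
        assert (E : theta u - theta t = gamma c * (L * (u - t))).
        { replace (L * (u - t)) with (A + L * u - (A + L * t)) by ring.
          rewrite Hm. field. lra. }
        rewrite E. field. lra. }
  assert (Hthc : cont_on_I01 theta).
  { apply cont_eps. intros t Ht e He.
    set (x := theta t).
    destruct (Hth t Ht) as [[Hx1 Hx2] Hx3]. fold x in Hx1, Hx2, Hx3.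
    set (d1 := if Rle_dec (x + e) 1 then H (x + e) - H x else 1).
    set (d2 := if Rle_dec 0 (x - e) then H x - H (x - e) else 1).
    assert (Hd1 : 0 < d1).
    { unfold d1. destruct (Rle_dec (x + e) 1); [|lra].
      pose proof (Hstrict x (x + e)). lra. }
    assert (Hd2 : 0 < d2).
    { unfold d2. destruct (Rle_dec 0 (x - e)); [|lra].
      pose proof (Hstrict (x - e) x). lra. }
    assert (Hm : 0 < Rmin d1 d2) by (apply Rmin_pos; auto).
    exists (Rmin d1 d2 / L). split; [apply Rdiv_lt_0_compat; auto|].
    intros u Hu Hut.
    assert (HLu : L * Rabs (u - t) < Rmin d1 d2).
    { apply Rmult_lt_compat_l with (r := L) in Hut; auto.
      replace (L * (Rmin d1 d2 / L)) with (Rmin d1 d2) in Hut by (field; lra). auto. }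
    pose proof (Rmin_l d1 d2). pose proof (Rmin_r d1 d2).
    destruct (Hth u Hu) as [[Hu1 Hu2] Hu3].
    destruct (Rlt_le_dec (Rabs (theta u - x)) e) as [|Hge]; auto. exfalso.
    destruct (Rcase_abs (theta u - x)) as [Hn|Hp].
    - rewrite Rabs_left in Hge by lra.
      assert (Hxe : 0 <= x - e) by lra.
      unfold d2 in *. destruct (Rle_dec 0 (x - e)); [|lra].
      pose proof (Hmono (theta u) (x - e) ltac:(split; lra) ltac:(split; lra) ltac:(lra)).
      pose proof (Rabs_Ropp (u - t)). pose proof (Rle_abs (-(u - t))).
      assert (L * (t - u) <= L * Rabs (u - t)).
      { apply Rmult_le_compat_l; lra. }
      lra.
    - rewrite Rabs_right in Hge by lra.
      assert (Hxe : x + e <= 1) by lra.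
      unfold d1 in *. destruct (Rle_dec (x + e) 1); [|lra].
      pose proof (Hmono (x + e) (theta u) ltac:(split; lra) ltac:(split; lra) ltac:(lra)).
      pose proof (Rle_abs (u - t)).
      assert (L * (u - t) <= L * Rabs (u - t)).
      { apply Rmult_le_compat_l; lra. }
      lra. }
  assert (Hthr : forall t, I01 t -> I01 (theta t)) by (intros t Ht; apply (Hth t Ht)).
  assert (Hder : is_derive_on_I01 theta (fun t => L * gamma (theta t))).
  { intros t Ht. apply filterlim_locally. intros e.
    pose proof (proj1 (cont_eps gamma) Hgc (theta t) (Hthr t Ht) (e / L)) as Hg.
    destruct Hg as [d1 [Hd1 Hg]]; [apply Rdiv_lt_0_compat; [apply cond_pos | auto]|].
    destruct (proj1 (cont_eps theta) Hthc t Ht d1 Hd1) as [d2 [Hd2 Hc2]].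
    exists (mkposreal d2 Hd2). intros u Hb [Hu Hne].
    change (Rabs (u - t) < d2) in Hb.
    change (Rabs ((theta u - theta t) / (u - t) - L * gamma (theta t)) < e).
    destruct (Hquot t u Ht Hu Hne) as [c [Jc [Hcb Hq]]]. rewrite Hq.
    assert (Ic : I01 c) by (unfold J01, I01 in *; lra).
    specialize (Hc2 u Hu Hb).
    specialize (Hg c Ic ltac:(lra)).
    replace (L * gamma c - L * gamma (theta t)) with (L * (gamma c - gamma (theta t))) by ring.
    rewrite Rabs_mult, (Rabs_right L) by lra.
    apply Rmult_lt_compat_l with (r := L) in Hg; auto.
    replace (L * (e / L)) with (pos e) in Hg by (field; lra). auto. }
  exists theta, (fun t => L * gamma (theta t)).
  split; [split|].
  { exact Hder. }
  { apply (cont_comp gamma theta _ L 0 Hgc Hthc Hthr). intros; ring. }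
  split; [exact Hthstr|]. split; [exact Hthr|]. split; [exact Hsurj|].
  exists (fun t => L * g (theta t) + - (L * eps)). split.
  { apply (cont_comp g theta _ L (- (L * eps)) Hgcont Hthc Hthr). intros; reflexivity. }
  intros t Ht. pose proof (HthJ t Ht) as Jt. rewrite (Hgeq _ Jt).
  pose proof (Hpos _ Jt). field. lra.
Qed.
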